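(* Let $g\in\mathrm{Lip}(\mathbb{R})$ satisfy $g(x)\ge g(-1)$ for all $x\in\mathbb{R}$ and $g(x)\ge x+1+g(-1)$ for all $x\in[-1,0]$. For $\varepsilon>0$ let $u^\varepsilon$ be the viscosity solution of $u^\varepsilon_t+u^\varepsilon_x=\varepsilon u^\varepsilon_{xx}$ in $\mathbb{R}\times(0,\infty)$, $u^\varepsilon(\cdot,0)=g$, and let $u$ be the viscosity solution of $u_t+u_x=0$ in $\mathbb{R}\times(0,\infty)$, $u(\cdot,0)=g$. Then for every $\varepsilon\in(0,\tfrac14)$, \[ |u^\varepsilon(0,1)-u(0,1)|=u^\varepsilon(0,1)-g(-1)\ge\frac{\mathrm{e}-1}{\sqrt{\pi}\,\mathrm{e}}\sqrt{\varepsilon}. \] *)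

(* Defs.v *)
From Stdlib Require Import Reals Lra.
From Coquelicot Require Import Coquelicot.
Open Scope R_scope.

(* Functions of two real variables (x, t) are curried: f : R -> R -> R. *)

Definition Lipschitz (g : R -> R) : Prop :=
  exists L : R, forall x y : R, Rabs (g x - g y) <= L * Rabs (x - y).

Definition cont2_within (P : R -> Prop) (f : R -> R -> R) (x0 t0 : R) : Prop :=
  forall e : R, 0 < e -> exists d : R, 0 < d /\
    forall x t : R, P t -> Rabs (x - x0) < d -> Rabs (t - t0) < d ->
      Rabs (f x t - f x0 t0) < e.

Definition cont2 (f : R -> R -> R) (x0 t0 : R) : Prop :=
  cont2_within (fun _ => True) f x0 t0.

Definition Dx (f : R -> R -> R) : R -> R -> R := fun x t => Derive (fun y => f y t) x.
Definition Dt (f : R -> R -> R) : R -> R -> R := fun x t => Derive (fun s => f x s) t.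

Definition C2 (phi : R -> R -> R) : Prop :=
  (forall x t, ex_derive (fun y => phi y t) x) /\
  (forall x t, ex_derive (fun s => phi x s) t) /\
  (forall x t, ex_derive (fun y => Dx phi y t) x) /\
  (forall x t, ex_derive (fun s => Dx phi x s) t) /\
  (forall x t, ex_derive (fun y => Dt phi y t) x) /\
  (forall x t, ex_derive (fun s => Dt phi x s) t) /\
  (forall x t, cont2 phi x t /\ cont2 (Dx phi) x t /\ cont2 (Dt phi) x t /\
               cont2 (Dx (Dx phi)) x t /\ cont2 (Dt (Dx phi)) x t /\
               cont2 (Dx (Dt phi)) x t /\ cont2 (Dt (Dt phi)) x t).

Definition loc_max (f : R -> R -> R) (x0 t0 : R) : Prop :=
  exists d : R, 0 < d /\ forall x t : R, 0 < t -> Rabs (x - x0) < d ->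
    Rabs (t - t0) < d -> f x t <= f x0 t0.
Definition loc_min (f : R -> R -> R) (x0 t0 : R) : Prop :=
  exists d : R, 0 < d /\ forall x t : R, 0 < t -> Rabs (x - x0) < d ->
    Rabs (t - t0) < d -> f x0 t0 <= f x t.

Definition visc_subsol (eps : R) (u : R -> R -> R) : Prop :=
  forall phi x0 t0, C2 phi -> 0 < t0 ->
    loc_max (fun x t => u x t - phi x t) x0 t0 ->
    Dt phi x0 t0 + Dx phi x0 t0 - eps * Dx (Dx phi) x0 t0 <= 0.
Definition visc_supersol (eps : R) (u : R -> R -> R) : Prop :=
  forall phi x0 t0, C2 phi -> 0 < t0 ->
    loc_min (fun x t => u x t - phi x t) x0 t0 ->
    Dt phi x0 t0 + Dx phi x0 t0 - eps * Dx (Dx phi) x0 t0 >= 0.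

(* u is "the" viscosity solution of the Cauchy problem with initial datum g:
   continuous on R x [0,oo), u(.,0) = g, viscosity sub- and supersolution in
   R x (0,oo), and in the standard uniqueness class (at most linear growth). *)
Definition visc_solution (eps : R) (g : R -> R) (u : R -> R -> R) : Prop :=
  (forall x t, 0 <= t -> cont2_within (fun s => 0 <= s) u x t) /\
  (forall x, u x 0 = g x) /\
  visc_subsol eps u /\ visc_supersol eps u /\
  (exists C : R, forall x t, 0 <= t -> Rabs (u x t) <= C * (1 + Rabs x + t)).

(* Main.v *)
Require Import Defs.
From Stdlib Require Import Reals Lra Psatz FunctionalExtensionality.
From Coquelicot Require Import Coquelicot.
Open Scope R_scope.

Module EVTm.
From HB Require Import structures.
From mathcomp Require Import all_boot all_order all_algebra.
From mathcomp Require Import all_classical all_reals topology normedtype derive.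
From mathcomp Require Import Rstruct Rstruct_topology.
Import Order.TTheory GRing.Theory Num.Theory.
Import numFieldNormedType.Exports.
Local Open Scope classical_set_scope.

Lemma evt2 (F : R -> R -> R) (a b c d : R) : Rle a b -> Rle c d ->
 (forall x t, Rle a x /\ Rle x b -> Rle c t /\ Rle t d -> forall e, Rlt 0 e -> exists del, Rlt 0 del /\
    forall x' t', Rle a x' /\ Rle x' b -> Rle c t' /\ Rle t' d -> Rlt (Rabs (Rminus x' x)) del ->
      Rlt (Rabs (Rminus t' t)) del -> Rlt (Rabs (Rminus (F x' t') (F x t))) e) ->
 exists x0 t0, (Rle a x0 /\ Rle x0 b) /\ (Rle c t0 /\ Rle t0 d) /\
   forall x t, Rle a x /\ Rle x b -> Rle c t /\ Rle t d -> Rle (F x t) (F x0 t0).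
Proof.
move=> ab cd hF.
pose A : set (R * R)%type := `[a, b] `*` `[c, d].
have A0 : A !=set0.
  exists (a, c); split; rewrite /= in_itv /=; apply/andP; split; apply/RleP => //; lra.
have cA : compact A by apply: compact_setX; apply: segment_compact.
have cf : {within A, continuous (fun p : R * R => F p.1 p.2)}.
  apply/subspace_continuousP => -[x t] [/= hx ht].
  move: hx ht; rewrite !in_itv /= => /andP[/RleP hx1 /RleP hx2] /andP[/RleP ht1 /RleP ht2].
  change ((fun p : R*R => F p.1 p.2) @ within A (nbhs (x,t)) --> F x t).
  apply/(@cvgrPdist_lt _ R^o) => e /RltP e0.
  have [del [del0 hdel]] := hF x t (conj hx1 hx2) (conj ht1 ht2) e e0.
  rewrite near_withinE.
  exists (ball x del, ball t del).
    by split; apply: nbhsx_ballx; apply/RltP.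
  move=> [y s] [/= hy hs] [/= hy' hs'].
  move: hy' hs'; rewrite !in_itv /= => /andP[/RleP hy1 /RleP hy2] /andP[/RleP hs1 /RleP hs2].
  move: hy hs; rewrite /ball /= => /RltP hy /RltP hs.
  rewrite -RabsE in hy hs.
  apply/RltP. rewrite -RabsE. rewrite Rabs_minus_sym; apply: hdel => //.
  by rewrite Rabs_minus_sym.
  by rewrite Rabs_minus_sym.
have [[x0 t0] hA hmax] := compact_EVT_max A0 cA cf.
move: hA; rewrite inE => -[/= hx ht].
move: hx ht; rewrite !in_itv /= => /andP[/RleP hx1 /RleP hx2] /andP[/RleP ht1 /RleP ht2].
exists x0, t0; split; [by []|split; [by []|]].
move=> x t [hx1' hx2'] [ht1' ht2'].
apply/RleP; apply: (hmax (x, t)).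
rewrite inE; split; rewrite /= in_itv /=; apply/andP; split; apply/RleP => //.
Qed.
End EVTm.


Lemma c2d_cont2 f x t : continuity_2d_pt f x t -> cont2 f x t.
Proof.
  intros H e He. destruct (H (mkposreal e He)) as [d Hd].
  exists d. split. apply cond_pos. intros u v _ Hu Hv. apply Hd; auto.
Qed.

Lemma cont2_cw P f x t : cont2 f x t -> cont2_within P f x t.
Proof.
  intros H e He. destruct (H e He) as [d [Hd1 Hd2]]. exists d. split; auto.
Qed.

Definition qf (a B C D E x0 t0 : R) (x t : R) : R :=
  a + B*(x-x0) + C*((x-x0)*(x-x0)) + D*(t-t0) + E*((t-t0)*(t-t0)).

Lemma Dx_qf a B C D E x0 t0 :
  Defs.Dx (qf a B C D E x0 t0) = fun x t => B + 2*C*(x-x0).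
Proof.
  apply functional_extensionality; intro x; apply functional_extensionality; intro t.
  unfold Defs.Dx, qf. apply is_derive_unique. auto_derive; auto. ring.
Qed.

Lemma Dt_qf a B C D E x0 t0 :
  Defs.Dt (qf a B C D E x0 t0) = fun x t => D + 2*E*(t-t0).
Proof.
  apply functional_extensionality; intro x; apply functional_extensionality; intro t.
  unfold Defs.Dt, qf. apply is_derive_unique. auto_derive; auto. ring.
Qed.

Lemma Dx_aff_x (p q x0 : R) : Defs.Dx (fun x t => p + q*(x-x0)) = fun x t => q.
Proof.
  apply functional_extensionality; intro x; apply functional_extensionality; intro t.
  unfold Defs.Dx. apply is_derive_unique. auto_derive; auto. ring.
Qed.
Lemma Dt_aff_x (p q x0 : R) : Defs.Dt (fun x t => p + q*(x-x0)) = fun x t => 0.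
Proof.
  apply functional_extensionality; intro x; apply functional_extensionality; intro t.
  unfold Defs.Dt. apply is_derive_unique. auto_derive; auto. 
Qed.
Lemma Dx_aff_t (p q t0 : R) : Defs.Dx (fun x t => p + q*(t-t0)) = fun x t => 0.
Proof.
  apply functional_extensionality; intro x; apply functional_extensionality; intro t.
  unfold Defs.Dx. apply is_derive_unique. auto_derive; auto.
Qed.
Lemma Dt_aff_t (p q t0 : R) : Defs.Dt (fun x t => p + q*(t-t0)) = fun x t => q.
Proof.
  apply functional_extensionality; intro x; apply functional_extensionality; intro t.
  unfold Defs.Dt. apply is_derive_unique. auto_derive; auto. ring.
Qed.

Ltac c2d :=
  repeat first
   [ apply continuity_2d_pt_plus | apply continuity_2d_pt_minus
   | apply continuity_2d_pt_mult | apply continuity_2d_pt_opp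
   | apply continuity_2d_pt_id1 | apply continuity_2d_pt_id2
   | apply continuity_2d_pt_const ].

Lemma C2_qf a B C D E x0 t0 : C2 (qf a B C D E x0 t0).
Proof.
  unfold C2. rewrite Dx_qf, Dt_qf.
  replace (fun x t : R => B + 2 * C * (x - x0)) with (fun x t : R => B + (2 * C) * (x - x0))
    by reflexivity.
  rewrite Dx_aff_x, Dt_aff_x, Dx_aff_t, Dt_aff_t.
  repeat split; intros; try (unfold qf; auto_derive; auto; fail);
    try (auto_derive; auto; fail);
    apply c2d_cont2; unfold qf; c2d.
Qed.

Lemma sub_test eps U x0 t0 B C D E :
  visc_subsol eps U -> 0 < t0 ->
  (exists d, 0 < d /\ forall x t, 0 < t -> Rabs (x - x0) < d -> Rabs (t - t0) < d ->
     U x t - U x0 t0 <= B*(x-x0) + C*((x-x0)*(x-x0)) + D*(t-t0) + E*((t-t0)*(t-t0))) ->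
  D + B - eps * (2*C) <= 0.
Proof.
  intros HU Ht0 [d [Hd HB]].
  pose (phi := qf (U x0 t0) B C D E x0 t0).
  assert (Hl : loc_max (fun x t => U x t - phi x t) x0 t0).
  { exists d. split; auto. intros x t Ht Hx Htt. specialize (HB x t Ht Hx Htt).
    unfold phi, qf. ring_simplify. lra. }
  specialize (HU phi x0 t0 (C2_qf _ _ _ _ _ _ _) Ht0 Hl).
  unfold phi in HU. rewrite Dx_qf, Dt_qf in HU.
  replace (fun x t : R => B + 2 * C * (x - x0)) with (fun x t : R => B + (2 * C) * (x - x0))
    in HU by reflexivity.
  rewrite Dx_aff_x in HU. ring_simplify in HU. lra.
Qed.


Lemma Dx_opp f : Defs.Dx (fun x t => - f x t) = fun x t => - Defs.Dx f x t.
Proof.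
  apply functional_extensionality; intro x; apply functional_extensionality; intro t.
  unfold Defs.Dx. apply Derive_opp.
Qed.
Lemma Dt_opp f : Defs.Dt (fun x t => - f x t) = fun x t => - Defs.Dt f x t.
Proof.
  apply functional_extensionality; intro x; apply functional_extensionality; intro t.
  unfold Defs.Dt. apply Derive_opp.
Qed.
Lemma cont2_opp f x t : cont2 f x t -> cont2 (fun x t => - f x t) x t.
Proof.
  intros H e He. destruct (H e He) as [d [Hd H1]]. exists d; split; auto.
  intros. replace (- f x0 t0 - - f x t) with (-(f x0 t0 - f x t)) by ring.
  rewrite Rabs_Ropp; auto.
Qed.

Lemma ex_derive_ropp (f : R -> R) x : ex_derive f x -> ex_derive (fun y => - f y) x.
Proof. intros [l H]. exists (-l). apply (is_derive_opp f x l H). Qed.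

Lemma C2_opp phi : C2 phi -> C2 (fun x t => - phi x t).
Proof.
  intros [h1 [h2 [h3 [h4 [h5 [h6 h7]]]]]].
  unfold C2. repeat (rewrite ?Dx_opp, ?Dt_opp).
  repeat split; intros; try (apply ex_derive_ropp; auto);
    try (apply cont2_opp; match goal with |- cont2 _ ?x ?t => destruct (h7 x t) as (?&?&?&?&?&?&?); assumption end). 
Qed.

Lemma super_neg eps u : visc_supersol eps u -> visc_subsol eps (fun x t => - u x t).
Proof.
  intros Hu phi x0 t0 Hphi Ht0 [d [Hd Hm]].
  assert (Hl : loc_min (fun x t => u x t - (fun x t => - phi x t) x t) x0 t0).
  { exists d; split; auto. intros x t Ht Hx Htt. specialize (Hm x t Ht Hx Htt). simpl in *. lra. }
  specialize (Hu _ x0 t0 (C2_opp _ Hphi) Ht0 Hl).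
  rewrite Dt_opp, Dx_opp, Dx_opp in Hu. lra.
Qed.


Definition UQ eps m (f : R -> R -> R) x0 t0 := forall k, 0 < k ->
  exists B C D E d, 0 < d /\ D + B - eps*(2*C) >= m - k /\
   forall x t, Rabs (x-x0) < d -> Rabs (t-t0) < d ->
     f x t - f x0 t0 <= B*(x-x0) + C*((x-x0)*(x-x0)) + D*(t-t0) + E*((t-t0)*(t-t0)).

Lemma UQ_plus eps m1 m2 f g x0 t0 : UQ eps m1 f x0 t0 -> UQ eps m2 g x0 t0 ->
  UQ eps (m1 + m2) (fun x t => f x t + g x t) x0 t0.
Proof.
  intros Hf Hg k Hk.
  destruct (Hf (k/2) ltac:(lra)) as (B1&C1&D1&E1&d1&Hd1&Hm1&H1).
  destruct (Hg (k/2) ltac:(lra)) as (B2&C2&D2&E2&d2&Hd2&Hm2&H2).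
  exists (B1+B2), (C1+C2), (D1+D2), (E1+E2), (Rmin d1 d2). split; [apply Rmin_pos; auto|split].
  - lra.
  - intros x t Hx Ht.
    assert (Hx1 : Rabs (x - x0) < d1) by (eapply Rlt_le_trans; [apply Hx|apply Rmin_l]).
    assert (Hx2 : Rabs (x - x0) < d2) by (eapply Rlt_le_trans; [apply Hx|apply Rmin_r]).
    assert (Ht1 : Rabs (t - t0) < d1) by (eapply Rlt_le_trans; [apply Ht|apply Rmin_l]).
    assert (Ht2 : Rabs (t - t0) < d2) by (eapply Rlt_le_trans; [apply Ht|apply Rmin_r]).
    specialize (H1 x t Hx1 Ht1). specialize (H2 x t Hx2 Ht2). nra.
Qed.

Lemma UQ_P eps g x0 t0 : 0 <= eps < 1/2 -> 0 < g -> 0 <= t0 ->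
  UQ eps (g*(1-2*eps)) (fun x t => g*((x-t)*(x-t) + t*t + t)) x0 t0.
Proof.
  intros He Hg Ht0 k Hk.
  set (th := k/(2*g+1)).
  assert (Hth : 0 < th) by (unfold th; apply Rdiv_lt_0_compat; lra).
  assert (Hgth : g * th < k).
  { unfold th. apply (Rmult_lt_reg_r (2*g+1)); [lra|].
    field_simplify; [nra|lra]. }
  exists (2*g*(x0-t0)), (g*(1+th)), (g*(-2*(x0-t0) + 2*t0 + 1)), (g*(2 + /th)), 1.
  split; [lra|split].
  - nra.
  - intros x t _ _.
    set (a := x - x0). set (b := t - t0).
    replace x with (x0 + a) by (unfold a; ring).
    replace t with (t0 + b) by (unfold b; ring).
    assert (Hab : 2 * (a*b) <= th * (a*a) + /th * (b*b) /\ - (2*(a*b)) <= th*(a*a) + /th*(b*b)).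
    { assert (h1 : 0 <= th * ((a - /th * b) * (a - /th*b))).
      { apply Rmult_le_pos; [lra| apply Rle_0_sqr]. }
      assert (h2 : 0 <= th * ((a + /th * b) * (a + /th*b))).
      { apply Rmult_le_pos; [lra| apply Rle_0_sqr]. }
      assert (e1 : th * ((a - /th * b) * (a - /th*b)) = th*(a*a) - 2*(a*b) + /th*(b*b)) by (field; lra).
      assert (e2 : th * ((a + /th * b) * (a + /th*b)) = th*(a*a) + 2*(a*b) + /th*(b*b)) by (field; lra).
      split; lra. }
    replace (x0 + a - x0) with a by ring. replace (t0 + b - t0) with b by ring.
    nra.
Qed.

Lemma cw_minus (P : R -> Prop) f g x t : cont2_within P f x t -> cont2_within P g x t ->
  cont2_within P (fun x t => f x t - g x t) x t.
Proof.
  intros Hf Hg e He.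
  destruct (Hf (e/2) ltac:(lra)) as [d1 [Hd1 H1]].
  destruct (Hg (e/2) ltac:(lra)) as [d2 [Hd2 H2]].
  exists (Rmin d1 d2). split; [apply Rmin_pos; auto|].
  intros u v Hv Hu Huv.
  assert (Hx1 : Rabs (u - x) < d1) by (eapply Rlt_le_trans; [apply Hu|apply Rmin_l]).
  assert (Hx2 : Rabs (u - x) < d2) by (eapply Rlt_le_trans; [apply Hu|apply Rmin_r]).
  assert (Ht1 : Rabs (v - t) < d1) by (eapply Rlt_le_trans; [apply Huv|apply Rmin_l]).
  assert (Ht2 : Rabs (v - t) < d2) by (eapply Rlt_le_trans; [apply Huv|apply Rmin_r]).
  specialize (H1 u v Hv Hx1 Ht1). specialize (H2 u v Hv Hx2 Ht2).
  replace (f u v - g u v - (f x t - g x t)) with ((f u v - f x t) - (g u v - g x t)) by ring.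
  eapply Rle_lt_trans; [apply Rabs_triang|]. rewrite Rabs_Ropp. lra.
Qed.

Theorem comparison eps U Phi : 0 <= eps < 1/2 ->
 (forall x t, 0 <= t -> cont2_within (fun s => 0 <= s) U x t) ->
 (exists C, forall x t, 0 <= t -> U x t <= C * (1 + Rabs x + t)) ->
 visc_subsol eps U ->
 (forall x t, 0 <= t -> cont2_within (fun s => 0 <= s) Phi x t) ->
 (exists C, forall x t, 0 <= t -> - (C * (1 + Rabs x + t)) <= Phi x t) ->
 (forall x, U x 0 <= Phi x 0) ->
 (forall x0 t0, 0 < t0 -> UQ eps 0 Phi x0 t0) ->
 forall x t, 0 <= t -> U x t <= Phi x t.
Proof.
  intros Heps HUc [C1 HC1] HUs HPc [C2 HC2] Hinit HUQ x1 t1 Ht1.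
  destruct (Rle_or_lt (U x1 t1) (Phi x1 t1)) as [|Hlt]; [auto|exfalso].
  set (m := U x1 t1 - Phi x1 t1).
  assert (Hm : 0 < m) by (unfold m; lra).
  set (C := Rabs C1 + Rabs C2).
  assert (HC : 0 <= C) by (unfold C; pose proof (Rabs_pos C1); pose proof (Rabs_pos C2); lra).
  assert (Hgrow : forall x t, 0 <= t -> U x t - Phi x t <= C * (1 + Rabs x + t)).
  { intros x t Ht. specialize (HC1 x t Ht). specialize (HC2 x t Ht).
    pose proof (Rabs_pos x).
    assert (C1 * (1 + Rabs x + t) <= Rabs C1 * (1 + Rabs x + t)).
    { apply Rmult_le_compat_r; [lra|apply Rle_abs]. }
    assert (C2 * (1 + Rabs x + t) <= Rabs C2 * (1 + Rabs x + t)).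
    { apply Rmult_le_compat_r; [lra|apply Rle_abs]. }
    unfold C. lra. }
  set (q1 := 1 + (x1-t1)*(x1-t1) + t1*t1 + t1).
  assert (Hq1 : 1 <= q1) by (unfold q1; nra).
  set (g := m / (2 * q1)).
  assert (Hg : 0 < g) by (unfold g; apply Rdiv_lt_0_compat; lra).
  set (P := fun x t => g*((x-t)*(x-t) + t*t + t)).
  set (Psi := fun x t => U x t - Phi x t - P x t).
  assert (HPsi1 : m/2 <= Psi x1 t1).
  { unfold Psi, P. assert (g * q1 = m/2) by (unfold g; field; lra).
    assert (U x1 t1 - Phi x1 t1 = m) by (unfold m; ring). unfold q1 in *. nra. }
  set (R0 := 12 * C / g + 1).
  assert (HR0 : 1 <= R0).
  { unfold R0. assert (0 <= 12 * C / g) by (apply Rmult_le_pos; [lra|left; apply Rinv_0_lt_compat; lra]). lra. }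
  assert (Hout : forall x t, 0 <= t -> (R0 <= Rabs x \/ R0 <= t) -> Psi x t < 0).
  { intros x t Ht Hor. unfold Psi, P.
    pose proof (Hgrow x t Ht).
    set (rho := Rabs x + t).
    assert (Hrho : R0 <= rho) by (unfold rho; pose proof (Rabs_pos x); destruct Hor; lra).
    assert (Hsq : rho * rho <= 2 * (x*x + t*t)).
    { unfold rho. pose proof (Rsqr_abs x) as hs. unfold Rsqr in hs. pose proof (Rabs_pos x). pose proof (Rle_0_sqr (Rabs x - t)). unfold Rsqr in *. nra. }
    assert (Hq : (x*x + t*t) <= 3 * ((x-t)*(x-t) + t*t)) by (pose proof (Rle_0_sqr (x - 3/2*t)); pose proof (Rle_0_sqr t); unfold Rsqr in *; nra).
    assert (Hgr : 12 * C < g * rho).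
    { unfold R0 in Hrho. apply (Rmult_le_compat_l g) in Hrho; [|lra].
      replace (g * (12 * C / g + 1)) with (12*C + g) in Hrho by (field; lra). lra. }
    assert (hc : C * (1 + rho) <= 2 * C * rho) by nra.
    assert (h6 : g * (rho * rho) <= 6 * (g * ((x - t) * (x - t) + t * t + t))).
    { assert (hh : rho * rho <= 6 * ((x - t) * (x - t) + t * t + t)) by lra.
      apply Rmult_le_compat_l with (r := g) in hh; lra. }
    assert (h7 : 12 * C * rho < g * rho * rho).
    { apply Rmult_lt_compat_r; lra. }
    assert (C*(1+Rabs x+t) = C*(1+rho)) by (unfold rho; ring).
    assert (g * rho * rho = g * (rho * rho)) by ring.
    lra. }
  assert (HPc' : forall x t, 0 <= t -> cont2_within (fun s => 0 <= s) P x t).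
  { intros x t _. apply cont2_cw. apply c2d_cont2. unfold P. c2d. }
  assert (HPsic : forall x t, 0 <= t -> cont2_within (fun s => 0 <= s) Psi x t).
  { intros x t Ht. unfold Psi. apply cw_minus; [apply cw_minus|]; auto. }
  destruct (EVTm.evt2 Psi (-R0) R0 0 R0 ltac:(lra) ltac:(lra)) as (x0 & t0 & Hx0 & Ht0 & Hmax).
  { intros x t Hx Ht e He. destruct (HPsic x t (proj1 Ht) e He) as [d [Hd Hd2]].
    exists d. split; auto. intros x' t' Hx' Ht' h1 h2. apply Hd2; auto. lra. }
  assert (Hin1 : Rabs x1 < R0 /\ t1 < R0).
  { destruct (Rlt_or_le (Rabs x1) R0); destruct (Rlt_or_le t1 R0); try (split; auto; fail);
    exfalso; pose proof (Hout x1 t1 Ht1 ltac:(auto)); lra. }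
  assert (HPsi0 : m/2 <= Psi x0 t0).
  { eapply Rle_trans; [apply HPsi1|]. apply Hmax; [|lra]. destruct Hin1 as [h _].
    apply Rabs_lt_between in h. lra. }
  assert (Hglob : forall x t, 0 <= t -> Psi x t <= Psi x0 t0).
  { intros x t Ht. destruct (Rlt_or_le (Rabs x) R0); destruct (Rlt_or_le t R0).
    - apply Hmax; [|lra]. apply Rabs_lt_between in H. lra.
    - pose proof (Hout x t Ht ltac:(auto)). lra.
    - pose proof (Hout x t Ht ltac:(auto)). lra.
    - pose proof (Hout x t Ht ltac:(auto)). lra. }
  assert (Ht0pos : 0 < t0).
  { destruct (Rle_lt_or_eq_dec 0 t0 (proj1 Ht0)) as [|<-]; auto. exfalso.
    specialize (Hinit x0). unfold Psi, P in HPsi0. nra. }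
  assert (HQ := UQ_plus eps 0 (g*(1-2*eps)) Phi P x0 t0 (HUQ x0 t0 Ht0pos)
                  (UQ_P eps g x0 t0 Heps Hg (proj1 Ht0))).
  set (mp := g*(1-2*eps)).
  assert (Hmp : 0 < mp) by (unfold mp; nra).
  destruct (HQ (mp/2) ltac:(lra)) as (B&Cc&D&E&d&Hd&HmB&HB).
  assert (HT := sub_test eps U x0 t0 B Cc D E HUs Ht0pos).
  assert (D + B - eps * (2*Cc) <= 0).
  { apply HT. exists d. split; auto. intros x t Ht Hx Htt.
    specialize (HB x t Hx Htt). specialize (Hglob x t ltac:(lra)). unfold Psi in Hglob.
    simpl in HB. lra. }
  fold mp in HmB. lra.
Qed.


Lemma cw_opp (P : R -> Prop) f x t : cont2_within P f x t -> cont2_within P (fun x t => - f x t) x t.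
Proof.
  intros H e He. destruct (H e He) as [d [Hd H1]]. exists d; split; auto.
  intros. replace (- f x0 t0 - - f x t) with (-(f x0 t0 - f x t)) by ring.
  rewrite Rabs_Ropp; auto.
Qed.

Lemma UQ_const eps c x0 t0 : UQ eps 0 (fun _ _ => c) x0 t0.
Proof.
  intros k Hk. exists 0, 0, 0, 0, 1. split; [lra|split]; [lra|].
  intros. lra.
Qed.

Lemma lin_growth_const c : forall x t : R, 0 <= t -> - (Rabs c * (1 + Rabs x + t)) <= c.
Proof.
  intros x t Ht. pose proof (Rabs_pos x). pose proof (Rabs_pos c).
  assert (Rabs c <= Rabs c * (1 + Rabs x + t)) by nra.
  pose proof (Rle_abs (-c)). rewrite Rabs_Ropp in H2. lra.
Qed.

Lemma sol_lower eps g u c : 0 <= eps < 1/2 -> visc_solution eps g u -> (forall x, c <= g x) ->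
  forall x t, 0 <= t -> c <= u x t.
Proof.
  intros He [Hc [H0 [Hsub [Hsup [C HC]]]]] Hg x t Ht.
  cut (- u x t <= - c); [lra|].
  apply (comparison eps (fun x t => - u x t) (fun _ _ => - c)); auto.
  - intros; apply cw_opp; auto.
  - exists C. intros x' t' Ht'. specialize (HC x' t' Ht'). pose proof (Rle_abs (- u x' t')).
    rewrite Rabs_Ropp in H. lra.
  - apply super_neg; auto.
  - intros; apply cont2_cw; apply c2d_cont2; c2d.
  - exists (Rabs (-c)). intros; apply lin_growth_const; auto.
  - intros x'. rewrite H0. specialize (Hg x'). lra.
  - intros; apply UQ_const.
Qed.

Lemma sqrt_quad_bound z z0 d : 0 < d ->
  sqrt (z*z + d*d) <= sqrt (z0*z0+d*d) + z0 / sqrt (z0*z0+d*d) * (z - z0)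
     + (z-z0)*(z-z0) / (2 * sqrt (z0*z0+d*d)).
Proof.
  intros Hd.
  set (s0 := sqrt (z0*z0+d*d)).
  assert (Hs0 : 0 < s0) by (unfold s0; apply sqrt_lt_R0; nra).
  assert (Hs02 : s0 * s0 = z0*z0+d*d) by (unfold s0; apply sqrt_sqrt; nra).
  set (s := sqrt (z*z + d*d)).
  assert (Hs2 : s * s = z*z+d*d) by (unfold s; apply sqrt_sqrt; nra).
  assert (key : 2 * s0 * s <= s*s + s0*s0) by (pose proof (Rle_0_sqr (s - s0)); unfold Rsqr in *; nra).
  apply (Rmult_le_reg_r (2*s0)); [lra|].
  replace ((s0 + z0 / s0 * (z - z0) + (z - z0) * (z - z0) / (2 * s0)) * (2 * s0))
    with (2*s0*s0 + 2*z0*(z-z0) + (z-z0)*(z-z0)) by (field; lra).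
  assert (E : 2*s0*s0 + 2*z0*(z-z0) + (z-z0)*(z-z0) = s*s + s0*s0)
    by (replace (2*s0*s0) with (2*(s0*s0)) by ring; rewrite Hs2, Hs02; ring).
  assert (s * (2*s0) = 2*s0*s) by ring. lra.
Qed.

Lemma sol_upper g u L d : visc_solution 0 g u -> 0 < L ->
  (forall x y, Rabs (g x - g y) <= L * Rabs (x - y)) -> 0 < d ->
  forall x t, 0 <= t -> u x t <= g (-1) + L * sqrt ((x-t+1)*(x-t+1) + d*d).
Proof.
  intros [Hc [H0 [Hsub [Hsup [C HC]]]]] HL Hg Hd.
  apply (comparison 0 u (fun x t => g (-1) + L * sqrt ((x-t+1)*(x-t+1) + d*d))); auto.
  - lra.
  - exists C. intros x t Ht. specialize (HC x t Ht). pose proof (Rle_abs (u x t)). lra.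
  - intros x t _. apply cont2_cw; apply c2d_cont2. c2d.
    apply continuity_1d_2d_pt_comp; [apply continuity_pt_sqrt; cbv beta; pose proof (Rle_0_sqr (x-t+1)); pose proof (Rle_0_sqr d); unfold Rsqr in *; lra|]. c2d.
  - exists (Rabs (g (-1))). intros x t Ht.
    pose proof (lin_growth_const (g (-1)) x t Ht).
    assert (0 <= L * sqrt ((x - t + 1) * (x - t + 1) + d * d)).
    { apply Rmult_le_pos; [lra|apply sqrt_pos]. }
    lra.
  - intros x. rewrite H0. specialize (Hg x (-1)).
    assert (Rabs (x - -1) <= sqrt ((x - 0 + 1) * (x - 0 + 1) + d * d)).
    { rewrite <- sqrt_Rsqr_abs. apply sqrt_le_1_alt. unfold Rsqr.
      replace (x - -1) with (x - 0 + 1) by ring. nra. }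
    apply Rabs_le_between in Hg. destruct Hg as [_ Hg].
    assert (L * Rabs (x - -1) <= L * sqrt ((x - 0 + 1) * (x - 0 + 1) + d * d)) by
      (apply Rmult_le_compat_l; lra).
    lra.
  - intros x0 t0 Ht0 k Hk.
    set (z0 := x0 - t0 + 1).
    set (s0 := sqrt (z0*z0+d*d)).
    assert (Hs0 : 0 < s0) by (unfold s0; apply sqrt_lt_R0; nra).
    exists (L * z0 / s0), (L / s0), (- (L * z0 / s0)), (L / s0), 1.
    split; [lra|split]; [lra|].
    intros x t _ _.
    pose proof (sqrt_quad_bound (x - t + 1) z0 d Hd) as Hq. fold s0 in Hq.
    replace (x - t + 1 - z0) with ((x - x0) - (t - t0)) in Hq by (unfold z0; ring).
    assert (Hsq : ((x - x0) - (t - t0)) * ((x - x0) - (t - t0)) <= 2*((x-x0)*(x-x0)) + 2*((t-t0)*(t-t0))).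
    { pose proof (Rle_0_sqr ((x - x0) + (t - t0))). unfold Rsqr in *. nra. }
    assert (Hq2 : sqrt ((x - t + 1) * (x - t + 1) + d * d) - s0 <=
       z0 / s0 * ((x - x0) - (t - t0)) + (2*((x-x0)*(x-x0)) + 2*((t-t0)*(t-t0))) / (2*s0)).
    { assert (((x - x0) - (t - t0)) * ((x - x0) - (t - t0)) / (2 * s0) <=
              (2*((x-x0)*(x-x0)) + 2*((t-t0)*(t-t0))) / (2*s0)).
      { apply Rmult_le_compat_r; [left; apply Rinv_0_lt_compat; lra|auto]. }
      lra. }
    fold z0. fold s0.
    apply (Rmult_le_compat_l L) in Hq2; [|lra].
    replace (g (-1) + L * sqrt ((x - t + 1) * (x - t + 1) + d * d) - (g (-1) + L * s0))
      with (L * (sqrt ((x - t + 1) * (x - t + 1) + d * d) - s0)) by ring.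
    eapply Rle_trans; [apply Hq2|]. right. field. lra.
Qed.

Lemma u_at_01 g u : visc_solution 0 g u -> Lipschitz g -> (forall x, g x >= g (-1)) ->
  u 0 1 = g (-1).
Proof.
  intros Hu [L0 HL0] Hmin.
  set (L := Rabs L0 + 1).
  assert (HL : 0 < L) by (unfold L; pose proof (Rabs_pos L0); lra).
  assert (Hg : forall x y, Rabs (g x - g y) <= L * Rabs (x - y)).
  { intros x y. eapply Rle_trans; [apply HL0|]. apply Rmult_le_compat_r; [apply Rabs_pos|].
    unfold L. pose proof (Rle_abs L0). lra. }
  apply Rle_antisym.
  - destruct (Rle_or_lt (u 0 1) (g (-1))) as [|Hlt]; auto. exfalso.
    set (d := (u 0 1 - g (-1)) / (2*L)).
    assert (Hd : 0 < d) by (unfold d; apply Rdiv_lt_0_compat; lra).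
    pose proof (sol_upper g u L d Hu HL Hg Hd 0 1 ltac:(lra)) as H.
    replace ((0 - 1 + 1) * (0 - 1 + 1) + d * d) with (d*d) in H by ring.
    rewrite sqrt_square in H; [|lra].
    unfold d in H. field_simplify in H; [|lra]. lra.
  - apply (sol_lower 0 g u (g (-1))); auto; try lra.
    intros x; specialize (Hmin x); lra.
Qed.


Definition g0 (a : R) : R := exp (-(a*a)).
Definition N0 (a : R) : R := RInt g0 0 a.

Lemma exd_cont (f : R -> R) (x : R) : ex_derive f x -> continuous f x.
Proof. intros H. exact (@ex_derive_continuous R_AbsRing R_NormedModule f x H). Qed.

Lemma exRI_cont (f : R -> R) a b : (forall z, Rmin a b <= z <= Rmax a b -> continuous f z) -> ex_RInt f a b.
Proof. exact (@ex_RInt_continuous R_CompleteNormedModule f a b). Qed.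
Lemma RI_correct (f : R -> R) a b : ex_RInt f a b -> is_RInt f a b (RInt f a b).
Proof. exact (@RInt_correct R_CompleteNormedModule f a b). Qed.
Lemma RI_Chasles (f : R -> R) a b c : ex_RInt f a b -> ex_RInt f b c -> RInt f a b + RInt f b c = RInt f a c.
Proof. exact (@RInt_Chasles R_CompleteNormedModule f a b c). Qed.
Lemma RI_unique (f : R -> R) a b l : is_RInt f a b l -> RInt f a b = l.
Proof. exact (@is_RInt_unique R_CompleteNormedModule f a b l). Qed.
Lemma RI_derive (f df : R -> R) a b :
  (forall x, Rmin a b <= x <= Rmax a b -> is_derive f x (df x)) ->
  (forall x, Rmin a b <= x <= Rmax a b -> continuous df x) -> is_RInt df a b (f b - f a).
Proof. exact (@is_RInt_derive R_CompleteNormedModule f df a b). Qed.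
Lemma RI_scal (f : R -> R) a b l : ex_RInt f a b -> RInt (fun x => l * f x) a b = l * RInt f a b.
Proof. exact (@RInt_scal R_CompleteNormedModule f a b l). Qed.
Lemma RI_comp_lin (f : R -> R) u v a b : ex_RInt f (u*a+v) (u*b+v) ->
  RInt (fun y => u * f (u*y+v)) a b = RInt f (u*a+v) (u*b+v).
Proof. exact (@RInt_comp_lin R_CompleteNormedModule f u v a b). Qed.
Lemma RI_ext (f g : R -> R) a b : (forall x, Rmin a b < x < Rmax a b -> f x = g x) -> RInt f a b = RInt g a b.
Proof. exact (@RInt_ext R_CompleteNormedModule f g a b). Qed.
Lemma RI_point (f : R -> R) a : RInt f a a = 0.
Proof. exact (@RInt_point R_CompleteNormedModule a f). Qed.
Lemma der_RInt (f If : R -> R) a b : locally b (fun b => is_RInt f a b (If b)) -> continuous f b -> is_derive If b (f b).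
Proof. exact (@is_derive_RInt R_CompleteNormedModule f If a b). Qed.

Lemma g0_pos a : 0 < g0 a. Proof. apply exp_pos. Qed.
Lemma g0_le1 a : g0 a <= 1.
Proof. unfold g0. rewrite <- exp_0. destruct (Req_dec a 0) as [->|].
  right; f_equal; ring. left; apply exp_increasing. nra. Qed.

Lemma is_derive_g0 a : is_derive g0 a (-2*a*g0 a).
Proof. unfold g0. auto_derive; auto. ring. Qed.

Lemma g0_cont a : continuous g0 a.
Proof. apply exd_cont. unfold g0. auto_derive; auto. Qed.

Lemma ex_RInt_g0 a b : ex_RInt g0 a b.
Proof. apply exRI_cont. intros; apply g0_cont. Qed.

Lemma is_derive_N0 a : is_derive N0 a (g0 a).
Proof.
  apply der_RInt with (If := N0) (a := 0).
  - apply filter_forall. intros b. unfold N0. apply RI_correct, ex_RInt_g0.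
  - apply g0_cont.
Qed.

Lemma N0_diff a b : N0 b - N0 a = RInt g0 a b.
Proof.
  unfold N0. rewrite <- (RI_Chasles g0 0 a b); [|apply ex_RInt_g0|apply ex_RInt_g0].
  unfold plus; simpl. ring.
Qed.

Lemma N0_mono a b : a <= b -> N0 a <= N0 b.
Proof.
  intros H. cut (0 <= N0 b - N0 a); [lra|]. rewrite N0_diff.
  apply RInt_ge_0; auto. apply ex_RInt_g0. intros; left; apply g0_pos.
Qed.

Lemma N0_0 : N0 0 = 0.
Proof. unfold N0. rewrite RI_point. reflexivity. Qed.

Lemma N0_tail a b : 0 <= b -> b <= a -> b * (N0 a - N0 b) <= (g0 b - g0 a)/2.
Proof.
  intros Hb Hba. rewrite N0_diff.
  assert (E1 : b * RInt g0 b a = RInt (fun v => b * g0 v) b a).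
  { rewrite (RI_scal g0 b a b (ex_RInt_g0 b a)). reflexivity. }
  assert (E2 : RInt (fun v => v * g0 v) b a = (g0 b - g0 a)/2).
  { apply RI_unique.
    replace ((g0 b - g0 a)/2) with ((fun v => - g0 v / 2) a - (fun v => - g0 v / 2) b)
      by field.
    apply (RI_derive (fun v => - g0 v / 2)).
    - intros x _. unfold g0. auto_derive; auto. field.
    - intros x _. apply exd_cont. unfold g0; auto_derive; auto. }
  rewrite E1, <- E2. apply RInt_le; auto.
  - apply exRI_cont. intros; apply exd_cont. unfold g0; auto_derive; auto.
  - apply exRI_cont. intros; apply exd_cont. unfold g0; auto_derive; auto.
  - intros x Hx. apply Rmult_le_compat_r; [left; apply g0_pos|lra].
Qed.

Definition gI (x : R) : R := RInt (fun t => exp (-(x*x)*(1+t*t)) / (1+t*t)) 0 1.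

Lemma gI_deriv x : is_derive gI x (-2 * g0 x * N0 x).
Proof.
  unfold gI.
  assert (HD : forall u v, Derive (fun z => exp (-(z*z)*(1+v*v)) / (1+v*v)) u
                        = -2 * u * exp (-(u*u)*(1+v*v))).
  { intros u v. apply is_derive_unique. auto_derive.
    - nra.
    - field. nra. }
  eapply is_derive_ext; [intros t; reflexivity|].
  replace (-2 * g0 x * N0 x) with
    (RInt (fun t => Derive (fun u => exp (-(u*u)*(1+t*t)) / (1+t*t)) x) 0 1).
  - apply is_derive_RInt_param.
    + apply filter_forall. intros y t _. auto_derive. nra.
    + intros t _. apply continuity_2d_pt_ext with (f := fun u v => -2 * u * exp (-(u*u)*(1+v*v))).
      { intros; rewrite HD; reflexivity. }
      apply continuity_2d_pt_mult.
      * apply continuity_2d_pt_mult. apply continuity_2d_pt_const. apply continuity_2d_pt_id1.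
      * apply continuity_1d_2d_pt_comp.
        { apply derivable_continuous_pt. apply derivable_pt_exp. }
        repeat first [apply continuity_2d_pt_mult | apply continuity_2d_pt_plus
          | apply continuity_2d_pt_opp | apply continuity_2d_pt_id1 | apply continuity_2d_pt_id2
          | apply continuity_2d_pt_const].
    + apply filter_forall. intros y. apply exRI_cont. intros z _.
      apply exd_cont. auto_derive. nra.
  - rewrite (RI_ext _ (fun t => (-2 * g0 x) * (x * g0 (x * t + 0)))).
    + rewrite RI_scal.
      * rewrite (RI_comp_lin g0 x 0 0 1).
        { unfold N0. rewrite Rmult_0_r, Rplus_0_r, Rmult_1_r, Rplus_0_r. reflexivity. }
        apply ex_RInt_g0.
      * apply exRI_cont. intros z _.
        apply exd_cont. unfold g0. auto_derive; auto.
    + intros t _. rewrite HD. unfold g0.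
      replace (-(x*x)*(1+t*t)) with (-(x*x) + -((x*t+0)*(x*t+0))) by ring.
      rewrite exp_plus. ring.
Qed.

Lemma gauss_mass a : N0 a * N0 a <= PI / 4.
Proof.
  set (F := fun x => N0 x * N0 x + gI x).
  assert (HF : forall x, is_derive F x 0).
  { intros x. unfold F.
    replace 0 with (2 * g0 x * N0 x + (-2 * g0 x * N0 x)) by ring.
    apply @is_derive_plus.
    - eapply is_derive_ext; [intros t; reflexivity|].
      replace (2 * g0 x * N0 x) with (g0 x * N0 x + N0 x * g0 x) by ring.
      apply (is_derive_mult N0 N0 x (g0 x) (g0 x)); try apply is_derive_N0.
      intros; unfold mult; simpl; ring.
    - apply gI_deriv. }
  assert (HFc : forall x, F x = F 0).
  { intros x. destruct (MVT_gen F 0 x (fun _ => 0)) as [c [_ Hc]].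
    - intros; apply HF.
    - intros y _. apply continuity_pt_filterlim. apply exd_cont.
      eexists; apply HF.
    - lra. }
  assert (HF0 : F 0 = PI / 4).
  { unfold F. rewrite N0_0. unfold gI.
    rewrite (RInt_ext _ (fun t => / (1 + t^2))).
    - rewrite <- atan_1. replace (atan 1) with (atan 1 - atan 0) by (rewrite atan_0; ring).
      replace (atan 1 - atan 0) with (minus (atan 1) (atan 0)) by reflexivity.
      rewrite (RI_unique _ 0 1 (minus (atan 1) (atan 0))); [ring|].
      apply RI_derive.
      + intros x _. apply is_derive_Reals. apply derivable_pt_lim_atan.
      + intros x _. apply exd_cont. auto_derive. nra.
    - intros x _. replace (-(0*0)*(1+x*x)) with 0 by ring. rewrite exp_0. simpl. field. nra. }
  assert (HI : 0 <= gI a).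
  { unfold gI. apply RInt_ge_0; [lra| |].
    - apply exRI_cont. intros; apply exd_cont. auto_derive. nra.
    - intros x _. apply Rmult_le_pos; [left; apply exp_pos|]. left; apply Rinv_0_lt_compat. nra. }
  pose proof (HFc a). rewrite HF0 in H. unfold F in H. lra.
Qed.

Lemma N0_bound a : Rabs (N0 a) <= sqrt PI / 2.
Proof.
  pose proof (gauss_mass a).
  assert (Hs : sqrt PI * sqrt PI = PI) by (apply sqrt_sqrt; pose proof PI_RGT_0; lra).
  assert (0 <= sqrt PI) by apply sqrt_pos.
  destruct (Rle_or_lt (Rabs (N0 a)) (sqrt PI / 2)); auto. exfalso.
  pose proof (Rsqr_abs (N0 a)) as hs. unfold Rsqr in hs.
  assert (sqrt PI / 2 * (sqrt PI / 2) < Rabs (N0 a) * Rabs (N0 a)).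
  { apply Rmult_le_0_lt_compat; lra. }
  nra.
Qed.


Definition H z r := (z * (N0 (z/r) - N0 ((z-1)/r)) + r/2 * (g0 (z/r) - g0 ((z-1)/r))) / sqrt PI.
Definition H1 z r := (N0 (z/r) - N0 ((z-1)/r) - g0 ((z-1)/r) / r) / sqrt PI.
Definition H2 z r := (g0 (z/r) / r - g0 ((z-1)/r) / r + 2*(z-1)*g0((z-1)/r)/(r*r*r)) / sqrt PI.

Lemma Derive_N0 a : Derive (fun x => N0 x) a = g0 a.
Proof. apply is_derive_unique. apply is_derive_N0. Qed.
Lemma Derive_g0 a : Derive (fun x => g0 x) a = -2*a*g0 a.
Proof. apply is_derive_unique. apply is_derive_g0. Qed.
Lemma exd_N0 a : ex_derive (fun x => N0 x) a.
Proof. eexists; apply is_derive_N0. Qed.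
Lemma exd_g0 a : ex_derive (fun x => g0 x) a.
Proof. eexists; apply is_derive_g0. Qed.

Lemma sqrtPI_pos : 0 < sqrt PI.
Proof. apply sqrt_lt_R0, PI_RGT_0. Qed.

Ltac dtac := auto_derive; repeat split; try apply exd_N0; try apply exd_g0; auto;
  rewrite ?Derive_N0, ?Derive_g0.

Lemma H_dz z r : 0 < r -> is_derive (fun z => H z r) z (H1 z r).
Proof.
  intros Hr. pose proof sqrtPI_pos. unfold H, H1. dtac. unfold Rdiv, Rminus. field. lra.
Qed.

Lemma H1_dz z r : 0 < r -> is_derive (fun z => H1 z r) z (H2 z r).
Proof.
  intros Hr. pose proof sqrtPI_pos. unfold H1, H2. dtac. unfold Rdiv, Rminus. field. lra.
Qed.

Lemma H_dr z r : 0 < r -> is_derive (fun r => H z r) r (r/2 * H2 z r).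
Proof.
  intros Hr. pose proof sqrtPI_pos. unfold H, H2. dtac; try lra. unfold Rdiv, Rminus. field. lra.
Qed.

Lemma is_der_val (f : R -> R) x l l' : is_derive f x l -> l = l' -> is_derive f x l'.
Proof. intros H ->; auto. Qed.

Definition rr eps s := sqrt (4*eps*s).
Definition V eps z s := H z (rr eps s).
Definition F1 eps z s := H1 z (rr eps s).
Definition F2 eps z s := H2 z (rr eps s).

Lemma rr_pos eps s : 0 < eps -> 0 < s -> 0 < rr eps s.
Proof. intros; unfold rr; apply sqrt_lt_R0; nra. Qed.

Lemma V_ds eps z s : 0 < eps -> 0 < s -> is_derive (fun s => V eps z s) s (eps * F2 eps z s).
Proof.
  intros He Hs. pose proof (rr_pos eps s He Hs) as Hr.
  unfold V, F2.
  eapply is_derive_ext; [intros t; reflexivity|].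
  assert (Hd : is_derive (rr eps) s (2*eps / rr eps s)).
  { unfold rr. auto_derive. nra. 
    assert (sqrt (4*eps*s) <> 0) by (apply Rgt_not_eq, sqrt_lt_R0; nra). field; auto. }
  pose proof (is_derive_comp (fun r => H z r) (rr eps) s _ _ (H_dr z (rr eps s) Hr) Hd) as HH.
  eapply is_derive_ext; [|eapply is_der_val; [apply HH|]]. intros t; reflexivity.
  unfold scal; simpl; unfold mult; simpl. field. lra.
Qed.

Lemma N0_cont_pt a : continuity_pt N0 a.
Proof. apply continuity_pt_filterlim. apply exd_cont. eexists; apply is_derive_N0. Qed.

Ltac c2dfull :=
  repeat first
   [ apply continuity_2d_pt_plus | apply continuity_2d_pt_minus
   | apply continuity_2d_pt_mult | apply continuity_2d_pt_opp
   | apply continuity_2d_pt_id1 | apply continuity_2d_pt_id2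
   | apply continuity_2d_pt_const
   | apply continuity_2d_pt_inv
   | apply (continuity_1d_2d_pt_comp exp); [apply derivable_continuous_pt, derivable_pt_exp|]
   | apply (continuity_1d_2d_pt_comp N0); [apply N0_cont_pt|]
   | apply (continuity_1d_2d_pt_comp sqrt) ].

Lemma F2_cont eps z0 s0 : 0 < eps -> 0 < s0 -> continuity_2d_pt (F2 eps) z0 s0.
Proof.
  intros He Hs. pose proof sqrtPI_pos.
  pose proof (rr_pos eps s0 He Hs) as Hr. unfold rr in Hr.
  unfold F2, H2, rr, g0. unfold Rdiv, Rminus.
  eapply continuity_2d_pt_ext; [intros; reflexivity|].
  c2dfull.
  all: cbv beta.
  all: try (apply continuity_pt_sqrt; nra).
  all: try (apply Rgt_not_eq; repeat apply Rmult_lt_0_compat; lra).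
Qed.

Lemma W_cont eps tau x0 t0 : 0 < eps -> 0 < t0 + tau ->
  continuity_2d_pt (fun x t => V eps (x - t + 1) (t + tau)) x0 t0.
Proof.
  intros He Hs. pose proof sqrtPI_pos.
  pose proof (rr_pos eps (t0+tau) He Hs) as Hr. unfold rr in Hr.
  unfold V, H, rr, g0. unfold Rdiv, Rminus.
  eapply continuity_2d_pt_ext; [intros; reflexivity|].
  c2dfull.
  all: cbv beta.
  all: try (apply continuity_pt_sqrt; nra).
  all: try (apply Rgt_not_eq; repeat apply Rmult_lt_0_compat; lra).
Qed.

Lemma center_lip (f : R -> R) s0 : ex_derive f s0 ->
  exists d K, 0 < d /\ 0 <= K /\ forall s, Rabs (s - s0) < d -> Rabs (f s - f s0) <= K * Rabs (s - s0).
Proof.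
  intros [l Hl]. apply is_derive_Reals in Hl.
  destruct (Hl 1 ltac:(lra)) as [[d Hd] Hd2].
  exists d, (Rabs l + 1). split; [auto|split; [pose proof (Rabs_pos l); lra|]].
  intros s Hs. destruct (Req_dec s s0) as [->|Hne].
  - replace (f s0 - f s0) with 0 by ring. replace (s0 - s0) with 0 by ring. rewrite Rabs_R0. lra.
  - specialize (Hd2 (s - s0) ltac:(lra) Hs). replace (s0 + (s - s0)) with s in Hd2 by ring.
    assert (Hn : 0 < Rabs (s - s0)) by (apply Rabs_pos_lt; lra).
    assert (E : f s - f s0 = ((f s - f s0) / (s - s0) - l) * (s - s0) + l * (s - s0)) by (field; lra).
    rewrite E. eapply Rle_trans; [apply Rabs_triang|]. rewrite !Rabs_mult.
    assert (Rabs ((f s - f s0) / (s - s0) - l) * Rabs (s - s0) <= 1 * Rabs (s - s0)).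
    { apply Rmult_le_compat_r; lra. }
    lra.
Qed.

Lemma cpt_of_der (f : R -> R) x : ex_derive f x -> continuity_pt f x.
Proof. intros H. apply continuity_pt_filterlim. apply exd_cont. auto. Qed.

Lemma taylor2_lower (f f1 f2 : R -> R) z0 z m :
  (forall x, is_derive f x (f1 x)) -> (forall x, is_derive f1 x (f2 x)) ->
  (forall c, Rmin z0 z <= c <= Rmax z0 z -> m <= f2 c) ->
  m / 2 * ((z - z0) * (z - z0)) <= f z - f z0 - f1 z0 * (z - z0).
Proof.
  intros Hf Hf1 Hm.
  set (h := fun x => f x - f z0 - f1 z0 * (x - z0) - m/2 * ((x - z0)*(x - z0))).
  assert (Hh : forall x, is_derive h x (f1 x - f1 z0 - m * (x - z0))).
  { intros x. unfold h. eapply is_der_val.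
    - apply @is_derive_minus; [apply @is_derive_minus; [apply @is_derive_minus|]|].
      + apply Hf.
      + apply is_derive_const.
      + apply @is_derive_scal. apply @is_derive_minus; [apply is_derive_id|apply is_derive_const].
      + apply @is_derive_scal. apply @is_derive_mult;
          [apply @is_derive_minus; [apply is_derive_id|apply is_derive_const]|
           apply @is_derive_minus; [apply is_derive_id|apply is_derive_const]|].
        intros; unfold mult; simpl; ring.
    - unfold minus, plus, opp, scal, mult, one, zero; simpl. lra. }
  destruct (MVT_gen h z0 z _ (fun x _ => Hh x)) as [c [Hc Ec]].
  { intros x _. apply cpt_of_der. eexists; apply Hh. }
  set (k := fun x => f1 x - m * x).
  assert (Hk : forall x, is_derive k x (f2 x - m)).
  { intros x. unfold k. eapply is_der_val.
    - apply @is_derive_minus; [apply Hf1|]. apply @is_derive_scal. apply is_derive_id.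
    - unfold minus, plus, opp, scal, mult, one; simpl. ring. }
  destruct (MVT_gen k z0 c _ (fun x _ => Hk x)) as [c' [Hc' Ec']].
  { intros x _. apply cpt_of_der. eexists; apply Hk. }
  assert (Hhz0 : h z0 = 0) by (unfold h; ring).
  assert (Hhz : h z = (f2 c' - m) * (c - z0) * (z - z0)).
  { rewrite <- (Rminus_0_r (h z)), <- Hhz0, Ec.
    replace (f1 c - f1 z0 - m * (c - z0)) with (k c - k z0) by (unfold k; ring).
    rewrite Ec'. ring. }
  assert (Hm' : m <= f2 c').
  { apply Hm. unfold Rmin, Rmax in *. destruct (Rle_dec z0 z); destruct (Rle_dec z0 c); lra. }
  assert (Hsg : 0 <= (c - z0) * (z - z0)).
  { unfold Rmin, Rmax in Hc. destruct (Rle_dec z0 z); nra. }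
  assert (Hpos : 0 <= h z) by (rewrite Hhz; replace ((f2 c' - m) * (c - z0) * (z - z0)) with ((f2 c' - m) * ((c - z0) * (z - z0))) by ring; apply Rmult_le_pos; lra).
  unfold h in Hpos. lra.
Qed.

Lemma exd_F2s eps z0 s0 : 0 < eps -> 0 < s0 -> ex_derive (fun s => F2 eps z0 s) s0.
Proof.
  intros He Hs. pose proof sqrtPI_pos. pose proof (rr_pos eps s0 He Hs) as Hr. unfold rr in Hr.
  unfold F2, H2, rr, g0. auto_derive; repeat split; try nra; try lra. all: apply Rgt_not_eq; repeat apply Rmult_lt_0_compat; lra.
Qed.

Lemma exd_F1s eps z0 s0 : 0 < eps -> 0 < s0 -> ex_derive (fun s => F1 eps z0 s) s0.
Proof.
  intros He Hs. pose proof sqrtPI_pos. pose proof (rr_pos eps s0 He Hs) as Hr. unfold rr in Hr.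
  unfold F1, H1, rr. auto_derive; repeat split; try apply exd_N0; try apply exd_g0; try nra; try lra.
Qed.

Lemma V_lower eps z0 s0 : 0 < eps -> 0 < s0 -> forall k, 0 < k ->
  exists d K, 0 < d /\ 0 <= K /\ forall z s, Rabs (z - z0) < d -> Rabs (s - s0) < d ->
   F1 eps z0 s0 * (z - z0) + eps * F2 eps z0 s0 * (s - s0) + (F2 eps z0 s0 / 2 - k) * ((z-z0)*(z-z0))
   - K * (Rabs (z - z0) * Rabs (s - s0)) - K * ((s - s0)*(s - s0)) <= V eps z s - V eps z0 s0.
Proof.
  intros He Hs k Hk.
  destruct (F2_cont eps z0 s0 He Hs (mkposreal (2*k) ltac:(lra))) as [dc Hdc]. simpl in Hdc.
  destruct (center_lip _ s0 (exd_F2s eps z0 s0 He Hs)) as (d2 & K2 & Hd2 & HK2 & HL2).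
  destruct (center_lip _ s0 (exd_F1s eps z0 s0 He Hs)) as (d3 & K3 & Hd3 & HK3 & HL3).
  set (d := Rmin (Rmin dc d2) (Rmin d3 (s0/2))).
  assert (Hd : 0 < d) by (unfold d; repeat apply Rmin_pos; try lra; apply cond_pos).
  assert (Hdc' : d <= dc) by (unfold d; eapply Rle_trans; [apply Rmin_l|apply Rmin_l]).
  assert (Hd2' : d <= d2) by (unfold d; eapply Rle_trans; [apply Rmin_l|apply Rmin_r]).
  assert (Hd3' : d <= d3) by (unfold d; eapply Rle_trans; [apply Rmin_r|apply Rmin_l]).
  assert (Hd4' : d <= s0/2) by (unfold d; eapply Rle_trans; [apply Rmin_r|apply Rmin_r]).
  exists d, (K3 + eps * K2). split; [auto|split; [nra|]].
  intros z s Hz Hsd.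
  assert (Hspos : 0 < s) by (apply Rabs_lt_between in Hsd; lra).
  pose proof (rr_pos eps s He Hspos) as Hr.
  assert (Ha : (F2 eps z0 s0 - 2*k) / 2 * ((z - z0) * (z - z0)) <=
               V eps z s - V eps z0 s - F1 eps z0 s * (z - z0)).
  { apply (taylor2_lower (fun z => V eps z s) (fun z => F1 eps z s) (fun z => F2 eps z s)).
    - intros x. unfold V, F1. apply H_dz; auto.
    - intros x. unfold F1, F2. apply H1_dz; auto.
    - intros c Hc.
      assert (Hcz : Rabs (c - z0) < dc).
      { apply Rle_lt_trans with (Rabs (z - z0)); [|lra].
        unfold Rmin, Rmax in Hc. destruct (Rle_dec z0 z).
        - rewrite !Rabs_right; lra.
        - rewrite !Rabs_left1; lra. }
      specialize (Hdc c s Hcz ltac:(lra)). apply Rabs_lt_between in Hdc. lra. }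
  assert (Hb : F1 eps z0 s0 * (z - z0) - K3 * (Rabs (z - z0) * Rabs (s - s0)) <= F1 eps z0 s * (z - z0)).
  { specialize (HL3 s ltac:(lra)).
    assert (Hab : Rabs ((F1 eps z0 s - F1 eps z0 s0) * (z - z0)) <= K3 * Rabs (s - s0) * Rabs (z - z0)).
    { rewrite Rabs_mult. apply Rmult_le_compat_r; [apply Rabs_pos|auto]. }
    apply Rabs_le_between in Hab. nra. }
  assert (Hc : eps * F2 eps z0 s0 * (s - s0) - eps * K2 * ((s - s0)*(s - s0)) <= V eps z0 s - V eps z0 s0).
  { destruct (MVT_gen (fun s => V eps z0 s) s0 s (fun s => eps * F2 eps z0 s)) as [c [Hc Ec]].
    - intros x Hx. apply V_ds; auto. unfold Rmin, Rmax in Hx. apply Rabs_lt_between in Hsd.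
      destruct (Rle_dec s0 s); lra.
    - intros x Hx. apply cpt_of_der. eexists. apply V_ds; auto. unfold Rmin, Rmax in Hx.
      apply Rabs_lt_between in Hsd. destruct (Rle_dec s0 s); lra.
    - rewrite Ec.
      assert (Hcs : Rabs (c - s0) <= Rabs (s - s0)).
      { unfold Rmin, Rmax in Hc. destruct (Rle_dec s0 s).
        - rewrite !Rabs_right; lra.
        - rewrite !Rabs_left1; lra. }
      specialize (HL2 c ltac:(lra)).
      assert (Hq : Rabs ((F2 eps z0 c - F2 eps z0 s0) * (s - s0)) <= K2 * ((s - s0) * (s - s0))).
      { rewrite Rabs_mult. pose proof (Rsqr_abs (s - s0)) as hs. unfold Rsqr in hs. rewrite hs.
        replace (K2 * (Rabs (s - s0) * Rabs (s - s0))) with (K2 * Rabs (s - s0) * Rabs (s - s0)) by ring.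
        apply Rmult_le_compat_r; [apply Rabs_pos|]. eapply Rle_trans; [apply HL2|].
        apply Rmult_le_compat_l; auto. }
      apply Rabs_le_between in Hq. 
      assert (eps * ((F2 eps z0 c - F2 eps z0 s0) * (s - s0)) >= - (eps * (K2 * ((s - s0) * (s - s0))))).
      { assert (Hq2 : - (K2 * ((s - s0) * (s - s0))) <= (F2 eps z0 c - F2 eps z0 s0) * (s - s0)) by lra.
        apply Rmult_le_compat_l with (r := eps) in Hq2; lra. }
      nra. }
  assert (E : (F2 eps z0 s0 - 2*k) / 2 = F2 eps z0 s0 / 2 - k) by field.
  rewrite E in Ha.
  assert (Hm : (K3 + eps * K2) * (Rabs (z - z0) * Rabs (s - s0)) >= K3 * (Rabs (z - z0) * Rabs (s - s0))).
  { pose proof (Rabs_pos (z - z0)). pose proof (Rabs_pos (s - s0)).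
    assert (0 <= eps * K2 * (Rabs (z - z0) * Rabs (s - s0))) by (repeat apply Rmult_le_pos; lra).
    nra. }
  assert (Hm2 : (K3 + eps * K2) * ((s - s0) * (s - s0)) >= eps * K2 * ((s - s0) * (s - s0))).
  { assert (0 <= K3 * ((s - s0) * (s - s0))) by (apply Rmult_le_pos; [lra|apply Rle_0_sqr]). nra. }
  lra.
Qed.

Lemma ab_bound a b th : 0 < th -> a * b <= th * (a*a) + /th * (b*b).
Proof.
  intros Hth.
  assert (e1 : th * ((a - /th * b) * (a - /th*b)) = th*(a*a) - 2*(a*b) + /th*(b*b)) by (field; lra).
  assert (0 <= th * ((a - /th * b) * (a - /th*b))) by (apply Rmult_le_pos; [lra|apply Rle_0_sqr]).
  assert (0 <= th*(a*a)) by (apply Rmult_le_pos; [lra|apply Rle_0_sqr]).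
  assert (0 <= /th*(b*b)) by (apply Rmult_le_pos; [left; apply Rinv_0_lt_compat; lra|apply Rle_0_sqr]).
  lra.
Qed.

Lemma UQ_W_aux (F1v F2v eps kap K A th c2 dx dt dVV : R) :
  0 < eps -> 0 <= K -> 0 < th -> c2 = F2v / 2 - kap -> A = 2 * Rabs c2 + K ->
  F1v * (dx - dt) + eps * F2v * dt + c2 * ((dx - dt)*(dx - dt))
   - K * (Rabs (dx - dt) * Rabs dt) - K * (dt * dt) <= dVV ->
  - dVV <= (- F1v) * dx + (- c2 + A * th) * (dx * dx) + (F1v - eps * F2v) * dt
           + (Rabs c2 + 2 * K + A / th) * (dt * dt).
Proof.
  intros He HK Hth Ec2 EA Hlow.
  set (a := Rabs dx). set (b := Rabs dt).
  assert (Ha : dx * dx = a * a) by (unfold a; pose proof (Rsqr_abs dx) as h; unfold Rsqr in h; auto).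
  assert (Hb : dt * dt = b * b) by (unfold b; pose proof (Rsqr_abs dt) as h; unfold Rsqr in h; auto).
  assert (Ha0 : 0 <= a) by apply Rabs_pos. assert (Hb0 : 0 <= b) by apply Rabs_pos.
  assert (Hc2 : 0 <= Rabs c2) by apply Rabs_pos.
  assert (Hx1 : c2 * (dx * dt) <= Rabs c2 * (a * b)).
  { unfold a, b. rewrite <- Rabs_mult. rewrite <- Rabs_mult. eapply Rle_trans; [apply Rle_abs|].
    right; reflexivity. }
  assert (Hx2 : - (c2 * (dt * dt)) <= Rabs c2 * (b * b)).
  { rewrite Hb. assert (hbb : 0 <= b*b) by nra. pose proof (Rle_abs (-c2)) as hc. rewrite Rabs_Ropp in hc.
    apply Rmult_le_compat_r with (r := b*b) in hc; lra. }
  assert (Hx3 : Rabs (dx - dt) * Rabs dt <= a * b + b * b).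
  { fold b. replace (a*b+b*b) with ((a+b)*b) by ring. apply Rmult_le_compat_r; [auto|]. unfold a, b.
    unfold Rminus. eapply Rle_trans; [apply Rabs_triang|]. rewrite Rabs_Ropp. lra. }
  assert (Hx4 : a * b <= th * (a*a) + /th * (b*b)) by (apply ab_bound; auto).
  assert (Hexp : c2 * ((dx - dt)*(dx - dt)) = c2 * (dx*dx) - 2 * (c2 * (dx * dt)) + c2 * (dt*dt)) by ring.
  assert (Elin : -(F1v*(dx-dt)) - eps*F2v*dt = (-F1v)*dx + (F1v - eps*F2v)*dt) by ring.
  assert (HK1 : K * (Rabs (dx - dt) * Rabs dt) <= K * (a * b) + K * (b * b)).
  { rewrite <- Rmult_plus_distr_l. apply Rmult_le_compat_l; auto. }
  assert (HA1 : A * (a * b) <= A * (th * (a*a)) + A * (/th * (b*b))).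
  { rewrite <- Rmult_plus_distr_l. apply Rmult_le_compat_l; auto. rewrite EA. lra. }
  assert (EA1 : A * (a * b) = 2 * (Rabs c2 * (a * b)) + K * (a * b)) by (rewrite EA; ring).
  assert (E2 : A / th * (dt * dt) = A * (/th * (b*b))) by (rewrite Hb; unfold Rdiv; ring).
  assert (E3 : (- c2 + A * th) * (dx * dx) = - (c2 * (dx*dx)) + A * (th * (a*a))) by (rewrite Ha; ring).
  assert (E4 : (Rabs c2 + 2 * K + A / th) * (dt * dt) = Rabs c2 * (b*b) + 2 * (K * (b*b)) + A / th * (dt*dt))
    by (rewrite Hb; ring).
  assert (E5 : K * (dt*dt) = K * (b*b)) by (rewrite Hb; ring).
  assert (E6 : c2 * (dt * dt) = c2 * (b*b)) by (rewrite Hb; ring).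
  lra.
Qed.


Lemma UQ_W eps tau c x0 t0 : 0 < eps -> 0 < t0 + tau ->
  UQ eps 0 (fun x t => c - V eps (x - t + 1) (t + tau)) x0 t0.
Proof.
  intros He Hs k Hk.
  set (s0 := t0 + tau). set (z0 := x0 - t0 + 1).
  set (F1v := F1 eps z0 s0). set (F2v := F2 eps z0 s0).
  set (kap := k / (4*eps+1)).
  assert (Hkap : 0 < kap) by (unfold kap; apply Rdiv_lt_0_compat; lra).
  destruct (V_lower eps z0 s0 He Hs kap Hkap) as (d & K & Hd & HK & Hlow).
  set (c2 := F2v/2 - kap).
  set (A := 2 * Rabs c2 + K).
  assert (HA : 0 <= A) by (unfold A; pose proof (Rabs_pos c2); lra).
  set (th := k / (4*eps*A+1)).
  assert (Hth : 0 < th) by (unfold th; apply Rdiv_lt_0_compat; nra).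
  exists (- F1v), (- c2 + A * th), (F1v - eps * F2v), (Rabs c2 + 2 * K + A / th), (d/2).
  split; [lra|split].
  - assert (h1 : 2 * eps * kap <= k / 2).
    { unfold kap. apply (Rmult_le_reg_r (4*eps+1)); [lra|].
      field_simplify; [|lra]. nra. }
    assert (h2 : 2 * eps * (A * th) <= k / 2).
    { unfold th. apply (Rmult_le_reg_r (4*eps*A+1)); [nra|].
      field_simplify; [|nra]. nra. }
    unfold c2. nra.
  - intros x t Hx Ht.
    assert (Hz : Rabs ((x - t + 1) - z0) < d).
    { replace ((x - t + 1) - z0) with ((x - x0) + - (t - t0)) by (unfold z0; ring).
      eapply Rle_lt_trans; [apply Rabs_triang|]. rewrite Rabs_Ropp. lra. }
    assert (Hsd : Rabs ((t + tau) - s0) < d).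
    { replace ((t + tau) - s0) with (t - t0) by (unfold s0; ring). lra. }
    specialize (Hlow _ _ Hz Hsd).
    replace ((x - t + 1) - z0) with ((x - x0) - (t - t0)) in Hlow by (unfold z0; ring).
    replace ((t + tau) - s0) with (t - t0) in Hlow by (unfold s0; ring).
    fold F1v F2v in Hlow.
    replace (c - V eps (x - t + 1) (t + tau) - (c - V eps z0 s0))
      with (- (V eps (x - t + 1) (t + tau) - V eps z0 s0)) by ring.
    eapply UQ_W_aux with (kap := kap); eauto.
Qed.


Lemma sqrtPI_gt1 : 1 < sqrt PI.
Proof. rewrite <- sqrt_1. apply sqrt_lt_1_alt. pose proof PI_RGT_0. split; [lra|].
  pose proof PI_4. pose proof PI2_3_2. lra. Qed.

Lemma M_bounds z r : 0 < r -> 0 <= N0 (z/r) - N0 ((z-1)/r) <= sqrt PI.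
Proof.
  intros Hr. split.
  - cut (N0 ((z-1)/r) <= N0 (z/r)); [lra|]. apply N0_mono.
    unfold Rdiv. apply Rmult_le_compat_r; [left; apply Rinv_0_lt_compat; lra|lra].
  - pose proof (N0_bound (z/r)) as hA. pose proof (N0_bound ((z-1)/r)) as hB.
    apply Rabs_le_between in hA. apply Rabs_le_between in hB. lra.
Qed.

Lemma H_upper z r : 0 < r -> H z r <= Rabs z + r / (2 * sqrt PI).
Proof.
  intros Hr. pose proof sqrtPI_pos as Hsp.
  destruct (M_bounds z r Hr) as [HM1 HM2].
  set (M := N0 (z/r) - N0 ((z-1)/r)) in *.
  unfold H. fold M.
  assert (h1 : z * M <= Rabs z * sqrt PI).
  { apply Rle_trans with (Rabs z * M). apply Rmult_le_compat_r; [auto|apply Rle_abs].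
    apply Rmult_le_compat_l; [apply Rabs_pos|auto]. }
  assert (h2 : r/2 * (g0 (z/r) - g0 ((z-1)/r)) <= r/2).
  { pose proof (g0_le1 (z/r)). pose proof (g0_pos ((z-1)/r)).
    assert (0 <= r/2) by lra. nra. }
  apply (Rmult_le_reg_r (sqrt PI)); [auto|].
  replace ((z * M + r / 2 * (g0 (z / r) - g0 ((z - 1) / r))) / sqrt PI * sqrt PI)
    with (z * M + r / 2 * (g0 (z / r) - g0 ((z - 1) / r))) by (field; lra).
  replace ((Rabs z + r / (2 * sqrt PI)) * sqrt PI) with (Rabs z * sqrt PI + r/2) by (field; lra).
  lra.
Qed.

Lemma H_init z r L (psi : R) : 0 < r -> 0 < L -> 0 <= psi -> (0 <= z <= 1 -> z <= psi) ->
  (1 <= z -> 1 - L * (z - 1) <= psi) ->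
  H z r <= psi + r * (1/2 + L) / sqrt PI.
Proof.
  intros Hr HL Hpsi Hmid Hhi. pose proof sqrtPI_pos as Hsp.
  destruct (M_bounds z r Hr) as [HM1 HM2].
  set (M := N0 (z/r) - N0 ((z-1)/r)) in *.
  unfold H. fold M.
  set (a := z/r) in *. set (b := (z-1)/r) in *.
  assert (hg : r/2 * (g0 a - g0 b) <= r/2).
  { pose proof (g0_le1 a). pose proof (g0_pos b). assert (0 <= r/2) by lra. nra. }
  assert (Hrp : 0 <= r * (1/2 + L) / sqrt PI) by (apply Rmult_le_pos; [nra|left; apply Rinv_0_lt_compat; lra]).
  assert (Hkey : z * M + r / 2 * (g0 a - g0 b) <= psi * sqrt PI + r * (1/2 + L)).
  { destruct (Rle_or_lt z 0) as [Hz|Hz].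
    - assert (z * M <= 0) by nra. assert (0 <= psi * sqrt PI) by nra. nra.
    - destruct (Rle_or_lt z 1) as [Hz1|Hz1].
      + specialize (Hmid ltac:(lra)). assert (z * M <= psi * sqrt PI) by nra. nra.
      +
        assert (Hb0 : 0 <= b) by (unfold b; apply Rmult_le_pos; [lra|left; apply Rinv_0_lt_compat; lra]).
        assert (Hba : b <= a) by (unfold a, b; unfold Rdiv; apply Rmult_le_compat_r; [left; apply Rinv_0_lt_compat; lra|lra]).
        pose proof (N0_tail a b Hb0 Hba) as Ht. fold M in Ht.
        assert (Hzb : z - 1 = r * b) by (unfold b; field; lra).
        assert (HMle : z * M + r / 2 * (g0 a - g0 b) <= M).
        { assert ((z - 1) * M <= r * ((g0 b - g0 a)/2)) by (rewrite Hzb; rewrite Rmult_assoc; apply Rmult_le_compat_l; lra).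
          lra. }
        assert (HN0b : 0 <= N0 b) by (rewrite <- N0_0; apply N0_mono; auto).
        assert (HMhalf : M <= sqrt PI / 2).
        { unfold M. pose proof (N0_bound a) as hb. apply Rabs_le_between in hb. fold a b. lra. }
        destruct (Rle_or_lt (L * (z - 1)) (1/2)) as [HLz|HLz].
        * specialize (Hhi ltac:(lra)). nra.
        * assert (Hbpos : 0 < b) by (unfold b; apply Rdiv_lt_0_compat; nra).
          assert (HMt : b * M <= 1/2).
          { pose proof (g0_le1 b). pose proof (g0_pos a). lra. }
          assert (HM3 : M <= r * L).
          { assert (Hrb : r * b = z - 1) by lra.
            assert (h1 : 2*b*(r*L) > 1).
            { replace (2*b*(r*L)) with (2*L*(r*b)) by ring. rewrite Hrb. lra. }
            destruct (Rle_or_lt M (r*L)) as [|hM]; auto.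
            assert (2*b*(r*L) < 2*b*M) by (apply Rmult_lt_compat_l; lra). lra. }
          nra. }
  apply (Rmult_le_reg_r (sqrt PI)); [auto|].
  replace ((z * M + r / 2 * (g0 a - g0 b)) / sqrt PI * sqrt PI)
    with (z * M + r / 2 * (g0 a - g0 b)) by (field; lra).
  replace ((psi + r * (1 / 2 + L) / sqrt PI) * sqrt PI) with (psi * sqrt PI + r * (1/2 + L)) by (field; lra).
  lra.
Qed.

Lemma H_at0 r : 0 < r -> H 0 r = r / 2 * (1 - exp (- (1 / (r*r)))) / sqrt PI.
Proof.
  intros Hr. unfold H, g0.
  replace (0 / r) with 0 by (field; lra).
  replace (-(0*0)) with 0 by ring. rewrite exp_0.
  replace (- ((0 - 1) / r * ((0 - 1) / r))) with (- (1 / (r * r))) by (field; lra).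
  unfold Rdiv; ring.
Qed.


Lemma sqrt_le_1plus y : 0 <= y -> sqrt y <= 1 + y.
Proof.
  intros Hy. pose proof (sqrt_sqrt y Hy). pose proof (sqrt_pos y).
  pose proof (Rle_0_sqr (sqrt y - 1)). unfold Rsqr in *. nra.
Qed.

Lemma Phi_growth eps tau c : 0 < eps < 1/4 -> 0 < tau ->
  exists C, forall x t, 0 <= t -> - (C * (1 + Rabs x + t)) <= c - V eps (x - t + 1) (t + tau).
Proof.
  intros He Ht. exists (Rabs c + 2 + tau). intros x t Htt.
  assert (Hr : 0 < rr eps (t + tau)) by (apply rr_pos; lra).
  pose proof (H_upper (x - t + 1) (rr eps (t + tau)) Hr) as HU.
  assert (Hrr : rr eps (t + tau) <= 1 + t + tau).
  { unfold rr. eapply Rle_trans; [apply sqrt_le_1plus; nra|]. nra. }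
  pose proof sqrtPI_gt1.
  assert (Hq : rr eps (t + tau) / (2 * sqrt PI) <= rr eps (t + tau) / 2).
  { unfold Rdiv. apply Rmult_le_compat_l; [lra|]. apply Rinv_le_contravar; lra. }
  assert (Habs : Rabs (x - t + 1) <= Rabs x + t + 1).
  { unfold Rminus. eapply Rle_trans; [apply Rabs_triang|]. rewrite Rabs_R1.
    apply Rplus_le_compat_r. eapply Rle_trans; [apply Rabs_triang|]. rewrite Rabs_Ropp, (Rabs_right t); lra. }
  unfold V. pose proof (Rabs_pos x). pose proof (Rle_abs (-c)) as hc. rewrite Rabs_Ropp in hc.
  assert (0 <= (Rabs c + 2 + tau) * (1 + Rabs x + t) - (Rabs c + (Rabs x + t + 1) + (1 + t + tau)/2)).
  { pose proof (Rabs_pos c). nra. }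
  lra.
Qed.

Theorem main_B g (hg : Lipschitz g)
  (hmin : forall x : R, g x >= g (-1))
  (hlin : forall x : R, -1 <= x <= 0 -> g x >= x + 1 + g (-1))
  (eps : R) (heps : 0 < eps < 1/4)
  (ueps : R -> R -> R) (hueps : visc_solution eps g ueps) :
  ueps 0 1 - g (-1) >= (exp 1 - 1) / (sqrt PI * exp 1) * sqrt eps.
Proof.
  destruct hg as [L0 HL0].
  set (L := Rabs L0 + 1).
  assert (HL : 0 < L) by (unfold L; pose proof (Rabs_pos L0); lra).
  assert (Hg : forall x y, Rabs (g x - g y) <= L * Rabs (x - y)).
  { intros x y. eapply Rle_trans; [apply HL0|]. apply Rmult_le_compat_r; [apply Rabs_pos|].
    unfold L. pose proof (Rle_abs L0). lra. }
  set (q := (1 + 4*eps)/2).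
  set (b := 1/q).
  assert (Hq : 0 < q < 1) by (unfold q; lra).
  assert (Hb : 1 < b) by (unfold b; apply (Rmult_lt_reg_r q); [lra|]; field_simplify; lra).
  set (g0v := exp (-1) - exp (-b)).
  assert (Hg0 : 0 < g0v) by (unfold g0v; pose proof (exp_increasing (-b) (-1) ltac:(lra)); lra).
  set (tau := Rmin ((1 - 4*eps)/(8*eps)) ((g0v/(2*(1/2+L))) * (g0v/(2*(1/2+L))))).
  assert (Htau : 0 < tau).
  { unfold tau. apply Rmin_pos. apply Rdiv_lt_0_compat; lra.
    assert (0 < g0v/(2*(1/2+L))) by (apply Rdiv_lt_0_compat; lra). nra. }
  set (om := rr eps tau * (1/2 + L) / sqrt PI).
  destruct hueps as [Hc [H0 [Hsub [Hsup [C HC]]]]].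
  assert (Hcmp : forall x t, 0 <= t -> - ueps x t <= (om - g (-1)) - V eps (x - t + 1) (t + tau)).
  { apply comparison with (eps := eps).
    - lra.
    - intros; apply cw_opp; auto.
    - exists C. intros x t Ht. specialize (HC x t Ht). pose proof (Rle_abs (- ueps x t)) as hu.
      rewrite Rabs_Ropp in hu. lra.
    - apply super_neg; auto.
    - intros x t Ht. apply cont2_cw. apply c2d_cont2. apply continuity_2d_pt_minus.
      apply continuity_2d_pt_const. apply W_cont; lra.
    - apply Phi_growth; lra.
    - intros x. rewrite H0.
      assert (Hr : 0 < rr eps (0 + tau)) by (apply rr_pos; lra).
      pose proof (H_init (x - 0 + 1) (rr eps (0 + tau)) L (g x - g (-1)) Hr HL) as HI.
      assert (V eps (x - 0 + 1) (0 + tau) <= g x - g (-1) + om).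
      { unfold V. replace (0 + tau) with tau in * by ring. unfold om. apply HI.
        - specialize (hmin x); lra.
        - intros Hz. specialize (hlin x ltac:(lra)). lra.
        - intros Hz. specialize (hlin 0 ltac:(lra)). specialize (Hg x 0).
          apply Rabs_le_between in Hg. rewrite Rabs_right in Hg; lra. }
      lra.
    - intros x0 t0 Ht0. apply UQ_W; lra. }
  specialize (Hcmp 0 1 ltac:(lra)).
  replace (0 - 1 + 1) with 0 in Hcmp by ring.
  set (r1 := rr eps (1 + tau)) in *.
  assert (Hr1 : 0 < r1) by (apply rr_pos; lra).
  unfold V in Hcmp. fold r1 in Hcmp. rewrite H_at0 in Hcmp; auto.
  pose proof sqrtPI_pos as Hsp.
  assert (Hr1sq : r1 * r1 = 4 * eps * (1 + tau)) by (unfold r1, rr; apply sqrt_sqrt; nra).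
  set (se := sqrt eps).
  assert (Hse : se * se = eps) by (unfold se; apply sqrt_sqrt; lra).
  assert (Hse0 : 0 < se) by (unfold se; apply sqrt_lt_R0; lra).
  assert (Htau1 : tau <= (1 - 4*eps)/(8*eps)) by (unfold tau; apply Rmin_l).
  assert (Htau2 : tau <= (g0v/(2*(1/2+L))) * (g0v/(2*(1/2+L)))) by (unfold tau; apply Rmin_r).
  assert (H4 : 4 * eps * (1 + tau) <= q).
  { unfold q. apply Rmult_le_compat_l with (r := 8*eps) in Htau1; [|lra].
    replace (8 * eps * ((1 - 4 * eps) / (8 * eps))) with (1 - 4*eps) in Htau1 by (field; lra). nra. }
  assert (Hexp : exp (- (1 / (r1 * r1))) <= exp (- b)).
  { destruct (Req_dec (1 / (r1*r1)) b) as [E|NE]; [rewrite E; lra|].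
    left; apply exp_increasing.
    assert (b <= 1 / (r1 * r1)).
    { unfold b. rewrite Hr1sq. unfold Rdiv. rewrite !Rmult_1_l. apply Rinv_le_contravar; nra. }
    lra. }
  assert (Hr1se : 2 * se <= r1).
  { assert (2*se*(2*se) <= r1*r1) by nra. nra. }
  set (rho := rr eps tau).
  assert (Hrho0 : 0 < rho) by (apply rr_pos; lra).
  assert (Hrhosq : rho * rho = 4 * eps * tau) by (unfold rho, rr; apply sqrt_sqrt; nra).
  set (st := sqrt tau).
  assert (Hst : st * st = tau) by (unfold st; apply sqrt_sqrt; lra).
  assert (Hst0 : 0 <= st) by (unfold st; apply sqrt_pos).
  assert (Hrho : rho = 2 * se * st).
  { assert (Hx : (rho - 2*se*st) * (rho + 2*se*st) = 0).
    { replace ((rho - 2*se*st) * (rho + 2*se*st)) with (rho*rho - 4*(se*se)*(st*st)) by ring.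
      rewrite Hrhosq, Hse, Hst. ring. }
    apply Rmult_integral in Hx. destruct Hx as [Hx|Hx]; [lra|]. nra. }
  set (kk := g0v/(2*(1/2+L))).
  assert (Hkk : 0 < kk) by (unfold kk; apply Rdiv_lt_0_compat; lra).
  assert (Hstk : st <= kk).
  { destruct (Rle_or_lt st kk); auto. assert (kk * kk < st * st) by nra. fold kk in Htau2. lra. }
  assert (Hom : rho * (1/2 + L) <= se * g0v).
  { rewrite Hrho. assert (2 * (1/2+L) * kk = g0v) by (unfold kk; field; lra).
    assert (2 * se * st * (1/2+L) <= 2 * se * kk * (1/2 + L)).
    { apply Rmult_le_compat_r; [lra|]. apply Rmult_le_compat_l; lra. }
    nra. }
  assert (Hmain : se * (1 - exp (-1)) <= r1 / 2 * (1 - exp (- (1 / (r1 * r1)))) - rho * (1/2 + L)).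
  { assert (h1 : se * (1 - exp (-b)) <= r1 / 2 * (1 - exp (- (1 / (r1 * r1))))).
    { assert (0 < 1 - exp (-b)).
      { pose proof (exp_increasing (-b) 0 ltac:(lra)) as he. rewrite exp_0 in he. lra. }
      apply Rle_trans with (r1/2 * (1 - exp (-b))). apply Rmult_le_compat_r; lra.
      apply Rmult_le_compat_l; lra. }
    unfold g0v in Hom. lra. }
  assert (Htarget : (exp 1 - 1) / (sqrt PI * exp 1) * se = se * (1 - exp (-1)) / sqrt PI).
  { assert (Em : exp (-1) = / exp 1) by (rewrite <- exp_Ropp; f_equal; lra).
    rewrite Em. pose proof (exp_pos 1). field. split; lra. }
  rewrite Htarget.
  unfold om in Hcmp. fold rho in Hcmp.
  assert (se * (1 - exp (-1)) / sqrt PI <= (r1 / 2 * (1 - exp (- (1 / (r1 * r1)))) - rho * (1/2 + L)) / sqrt PI).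
  { unfold Rdiv. apply Rmult_le_compat_r; [left; apply Rinv_0_lt_compat; lra|lra]. }
  assert (E : (r1 / 2 * (1 - exp (- (1 / (r1 * r1)))) - rho * (1/2 + L)) / sqrt PI
            = r1 / 2 * (1 - exp (- (1 / (r1 * r1)))) / sqrt PI - rho * (1 / 2 + L) / sqrt PI) by (field; lra).
  lra.
Qed.

Theorem proposition4p1 (g : R -> R) (hg : Lipschitz g)
  (hmin : forall x : R, g x >= g (-1))
  (hlin : forall x : R, -1 <= x <= 0 -> g x >= x + 1 + g (-1))
  (u : R -> R -> R) (hu : visc_solution 0 g u)
  (eps : R) (heps : 0 < eps < 1/4)
  (ueps : R -> R -> R) (hueps : visc_solution eps g ueps) :
  Rabs (ueps 0 1 - u 0 1) = ueps 0 1 - g (-1) /\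
  ueps 0 1 - g (-1) >= (exp 1 - 1) / (sqrt PI * exp 1) * sqrt eps.
Proof.
  pose proof (u_at_01 g u hu hg hmin) as Hu.
  pose proof (main_B g hg hmin hlin eps heps ueps hueps) as HB.
  assert (Hpos : 0 <= (exp 1 - 1) / (sqrt PI * exp 1) * sqrt eps).
  { pose proof (exp_increasing 0 1 ltac:(lra)) as he. rewrite exp_0 in he.
    pose proof sqrtPI_pos. pose proof (sqrt_pos eps).
    apply Rmult_le_pos; auto. unfold Rdiv. apply Rmult_le_pos; [lra|].
    left; apply Rinv_0_lt_compat; apply Rmult_lt_0_compat; lra. }
  split; [|auto].
  rewrite Hu. apply Rabs_right. lra.
Qed.
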